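(* Let $(\mathbf{A},\mathbf{b},\mathbf{c})$ be the Butcher tableau of an $s$-stage Runge–Kutta method satisfying the standing assumptions stated in the context, with stability function $r(z)=1+z\mathbf{b}^T(I-z\mathbf{A})^{-1}\mathbb{1}$ and row vector $\mathbf{q}(z)=\mathbf{b}^T(I-z\mathbf{A})^{-1}$. Fix a norm $\|\cdot\|$ on $\mathbb{C}^s$. Then there exists a constant $C_A>0$ such that \[ \max\big(|r(z)|,\ \|\mathbf{q}(z)\|\big)\le C_A|z|^{-1}\qquad\text{for all } z\in\mathbb{C},\ z\neq 0,\ \operatorname{Re} z\le 0. \]
   Context: Standing assumptions on the Runge–Kutta method (matrix $\mathbf{A}\in\mathbb{R}^{s\times s}$, weights $\mathbf{b}\in\mathbb{R}^s$, nodes $\mathbf{c}\in[0,1]^s$): (a) it is $A$-stable (i.e. $|r(z)|\le1$ for $\operatorname{Re}z\le0$) with classical order $p\ge1$ and stage order $q\le p$; (b) $|r(\mathrm{i}y)|<1$ for all real $y\neq0$; (c) $\mathbf{A}$ is invertible; (d) the method is stiffly accurate: $\mathbf{b}^T\mathbf{A}^{-1}=(0,\dots,0,1)$. Here $\mathbb{1}=(1,\dots,1)^T\in\mathbb{R}^s$. *)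

(* Defs.v *)
From HB Require Import structures.
From mathcomp Require Import all_boot all_order all_algebra.
From mathcomp Require Import complex.
From mathcomp Require Import reals.
Set Implicit Arguments. Unset Strict Implicit. Unset Printing Implicit Defensive.
Import Order.TTheory GRing.Theory Num.Theory.
Local Open Scope ring_scope.
Local Open Scope complex_scope.

Definition cabs (R : realType) (z : R[i]) : R := complex.Re `|z|.

Definition cmx (R : realType) m n (M : 'M[R]_(m, n)) : 'M[R[i]]_(m, n) :=
  map_mx (fun x : R => x%:C) M.

Definition rk_q (R : realType) s (A : 'M[R]_s) (b : 'cV[R]_s) (z : R[i])
  : 'rV[R[i]]_s :=
  (cmx b)^T *m invmx (1%:M - z *: cmx A).

Definition rk_r (R : realType) s (A : 'M[R]_s) (b : 'cV[R]_s) (z : R[i]) : R[i] :=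
  1 + z * (rk_q A b z *m (const_mx 1 : 'cV[R[i]]_s)) 0 0.

(* A-stability: for Re z <= 0, I - zA is invertible (r has no pole) and |r(z)| <= 1 *)
Definition A_stable (R : realType) s (A : 'M[R]_s) (b : 'cV[R]_s) : Prop :=
  forall z : R[i], complex.Re z <= 0 ->
    (1%:M - z *: cmx A) \in unitmx /\ cabs (rk_r A b z) <= 1.

Definition is_norm (R : realType) s (N : 'rV[R[i]]_s -> R) : Prop :=
  [/\ forall x, N x = 0 -> x = 0,
      forall (a : R[i]) x, N (a *: x) = cabs a * N x
    & forall x y, N (x + y) <= N x + N y].

(* Main.v *)
Require Import Defs.
From HB Require Import structures.
From mathcomp Require Import all_boot all_order all_algebra all_field all_fingroup.
From mathcomp Require Import complex.
From mathcomp Require Import reals.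
From mathcomp Require Import ring lra.
Import Order.TTheory GRing.Theory Num.Theory.
Local Open Scope ring_scope.
Local Open Scope complex_scope.
Set Implicit Arguments. Unset Strict Implicit.
Section Cabs.
Variable R : realType.
Implicit Types z w : R[i].

Lemma cabsE z : (cabs z)%:C = `|z|.
Proof. by rewrite /cabs normc_def. Qed.

Lemma cabs_ge0 z : 0 <= cabs z.
Proof. by rewrite -ler0c cabsE. Qed.

Lemma cabsM z w : cabs (z * w) = cabs z * cabs w.
Proof. by apply: (@complexI R); rewrite rmorphM /= !cabsE normrM. Qed.

Lemma cabsD z w : cabs (z + w) <= cabs z + cabs w.
Proof. by rewrite -lecR rmorphD /= !cabsE ler_normD. Qed.

Lemma cabsN z : cabs (- z) = cabs z.
Proof. by apply: (@complexI R); rewrite !cabsE normrN. Qed.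

Lemma cabsB z w : cabs (z - w) = cabs (w - z).
Proof. by rewrite -cabsN opprB. Qed.

Lemma cabsR (x : R) : cabs x%:C = `|x|.
Proof. by rewrite /cabs normc_def /= expr0n addr0 sqrtr_sqr. Qed.

Lemma cabs0 : cabs (0 : R[i]) = 0.
Proof. by have := cabsR 0; rewrite normr0. Qed.

Lemma cabs1 : cabs (1 : R[i]) = 1.
Proof. by have := cabsR 1; rewrite normr1. Qed.

Lemma cabs_eq0 z : (cabs z == 0) = (z == 0).
Proof. by rewrite -(inj_eq (@complexI R)) cabsE normr_eq0. Qed.

Lemma cabsV z : cabs (z^-1) = (cabs z)^-1.
Proof.
have [->|nz] := eqVneq z 0; first by rewrite invr0 cabs0 invr0.
have h : cabs z != 0 by rewrite cabs_eq0.
by apply: (mulIf h); rewrite -cabsM !mulVf // cabs1.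
Qed.

Lemma Re_le_cabs z : complex.Re z <= cabs z.
Proof.
rewrite -lecR cabsE; apply: le_trans (normc_ge_Re z).
by rewrite lecR ler_norm.
Qed.

Lemma cabs_sum (I : Type) (r : seq I) (P : pred I) (F : I -> R[i]) :
  cabs (\sum_(i <- r | P i) F i) <= \sum_(i <- r | P i) cabs (F i).
Proof.
elim/big_rec2: _ => [|i y1 y2 _ IH]; first by rewrite cabs0.
by apply: le_trans (cabsD _ _) _; rewrite lerD2l.
Qed.

Lemma cabs_prod (I : Type) (r : seq I) (P : pred I) (F : I -> R[i]) :
  cabs (\prod_(i <- r | P i) F i) = \prod_(i <- r | P i) cabs (F i).
Proof.
elim/big_rec2: _ => [|i y1 y2 _ IH]; first by rewrite cabs1.
by rewrite cabsM IH.
Qed.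

Lemma cabsX z n : cabs (z ^+ n) = cabs z ^+ n.
Proof. by elim: n => [|n IH]; rewrite ?expr0 ?cabs1 // !exprS cabsM IH. Qed.
End Cabs.

Section M3.
Variable R : realType.
Lemma det_bound n (X : 'M[R[i]]_n) t : 0 <= t -> (forall i j, cabs (X i j) <= t) ->
  cabs (\det X) <= (n`!)%:R * t ^+ n.
Proof.
move=> t0 hX; rewrite /determinant.
apply: le_trans (cabs_sum _ _ _) _.
rewrite mulr_natl -card_Sn -sumr_const; apply: ler_sum => σ _.
rewrite cabsM cabsX cabsN cabs1 expr1n mul1r cabs_prod.
rewrite -[n in t ^+ n]card_ord -prodr_const.
by apply: ler_prod => i _; rewrite cabs_ge0 hX.
Qed.
End M3.

Section M.
Variable R : realType.

Lemma prod_const_seq (T : Type) (r : seq T) (c : R[i]) : \prod_(l <- r) c = c ^+ size r.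
Proof. by elim: r => [|x r IH]; rewrite ?big_nil ?expr0 // big_cons IH exprS. Qed.

Lemma prod_const_seqR (T : Type) (r : seq T) (c : R) : \prod_(l <- r) c = c ^+ size r.
Proof. by elim: r => [|x r IH]; rewrite ?big_nil ?expr0 // big_cons IH exprS. Qed.

Lemma char_poly_horner n (M : 'M[R[i]]_n) x : (char_poly M).[x] = \det (x%:M - M).
Proof.
have := det_map_mx (horner_eval x) (char_poly_mx M).
rewrite /= horner_evalE /char_poly => <-; congr (\det _).
apply/matrixP => i j; rewrite !mxE /= horner_evalE.
by case: (i == j); rewrite /= ?hornerE.
Qed.

Lemma det_cmx n (M : 'M[R]_n) : \det (cmx M) = (\det M)%:C.
Proof. by rewrite -det_map_mx. Qed.

Lemma factor_bound (l z : R[i]) : l != 0 -> 0 < complex.Re (l^-1) -> complex.Re z <= 0 ->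
  cabs l * (complex.Re (l^-1) / (1 + complex.Re (l^-1) + cabs (l^-1))) * (1 + cabs z)
    <= cabs (1 - z * l).
Proof.
move=> l0 a0 z0.
have -> : 1 - z * l = l * (l^-1 - z) by rewrite mulrBr mulfV // mulrC.
set mu := l^-1 in a0 *.
rewrite cabsM -mulrA; apply: ler_wpM2l; first exact: cabs_ge0.
have hRe : forall u v : R[i], complex.Re (u - v) = complex.Re u - complex.Re v by move=> [? ?] [? ?].
have d1 : complex.Re mu <= cabs (mu - z).
  by apply: le_trans (Re_le_cabs _); rewrite hRe lerDl oppr_ge0.
have d2 : cabs z - cabs mu <= cabs (mu - z).
  rewrite lerBlDr cabsB; apply: le_trans (cabsD _ _); by rewrite subrK.
have m0 := cabs_ge0 mu; have c0 := cabs_ge0 z.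
rewrite mulrAC ler_pdivrMr; last by rewrite -addrA ltr_pwDl ?addr_ge0 // ltW.
nra.
Qed.

Lemma det_lower s (A : 'M[R]_s) :
  (forall z : R[i], complex.Re z <= 0 -> (1%:M - z *: cmx A) \in unitmx) ->
  A \in unitmx ->
  exists2 K1 : R, 0 < K1 & forall z : R[i], z != 0 -> complex.Re z <= 0 ->
    K1 * (1 + cabs z) ^+ s <= cabs (\det (1%:M - z *: cmx A)).
Proof.
move=> hst hA.
set p := char_poly (cmx A).
have [rs hp] := closed_field_poly_normal p.
have lc : lead_coef p = 1 by apply/monicP/char_poly_monic.
rewrite lc scale1r in hp.
have sz : size rs = s.
  by have := size_char_poly (cmx A); rewrite -/p hp size_prod_XsubC => -[].
have key : forall z, z != 0 -> \det (1%:M - z *: cmx A) = \prod_(l <- rs) (1 - z * l).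
  move=> z z0.
  have -> : 1%:M - z *: cmx A = z *: (z^-1%:M - cmx A).
    by rewrite scalerBr scale_scalar_mx mulfV.
  rewrite detZ -char_poly_horner -/p hp horner_prod -sz -prod_const_seq -big_split /=.
  by apply: eq_bigr => l _; rewrite hornerXsubC mulrBr mulfV.
have p0 : p.[0] != 0.
  rewrite char_poly_horner raddf0 sub0r -scaleN1r detZ det_cmx mulf_neq0 ?expf_neq0 ?oppr_eq0 ?oner_eq0 //.
  by move: hA; rewrite unitmxE unitfE; apply: contraNneq => /(@complexI R) ->.
have roots : forall l, l \in rs -> l != 0 /\ 0 < complex.Re (l^-1).
  move=> l lr.
  have rl : root p l by rewrite hp root_prod_XsubC.
  have l0 : l != 0 by apply/eqP => e; move: rl p0; rewrite e /root => ->.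
  split => //; rewrite ltNge; apply/negP => hle.
  have := hst _ hle; rewrite unitmxE unitfE key ?invr_eq0 //.
  by rewrite (big_rem l lr) /= mulVf // subrr mul0r eqxx.
pose k (l : R[i]) := cabs l * (complex.Re (l^-1) / (1 + complex.Re (l^-1) + cabs (l^-1))).
have kpos : forall l, l \in rs -> 0 < k l.
  move=> l /roots [l0 a0]; rewrite /k mulr_gt0 ?divr_gt0 //.
    by rewrite lt_def cabs_eq0 l0 cabs_ge0.
  by rewrite -addrA ltr_pwDl ?addr_ge0 ?cabs_ge0 // ltW.
exists (\prod_(l <- rs) k l).
  by rewrite big_seq prodr_gt0.
move=> z z0 zle; rewrite key // cabs_prod -sz -prod_const_seqR -big_split /=.
rewrite big_seq [X in _ <= X]big_seq; apply: ler_prod => l lr.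
have [l0 a0] := roots l lr.
rewrite mulr_ge0 ?(ltW (kpos l lr)) ?addr_ge0 ?cabs_ge0 //=.
exact: factor_bound.
Qed.

Lemma le_sum_nonneg (I : finType) (F : I -> R) i : (forall j, 0 <= F j) -> F i <= \sum_j F j.
Proof. by move=> h; rewrite (bigD1 i) //= lerDl sumr_ge0. Qed.

Lemma inv_entry_bound s (A : 'M[R]_s) :
  (forall z : R[i], complex.Re z <= 0 -> (1%:M - z *: cmx A) \in unitmx) ->
  A \in unitmx ->
  exists2 K : R, 0 < K & forall z : R[i], z != 0 -> complex.Re z <= 0 ->
    forall i j, cabs ((invmx (1%:M - z *: cmx A)) i j) <= K / (1 + cabs z).
Proof.
move=> hst hA; have [K1 K1p hK1] := det_lower hst hA.
case: s A hst hA K1p hK1 => [|n] A hst hA K1p hK1.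
  by exists 1 => // z _ _ [].
pose amax := \sum_i \sum_j `|A i j|.
have amax0 : 0 <= amax by rewrite sumr_ge0 // => i _; rewrite sumr_ge0.
have hAij : forall i j, `|A i j| <= amax.
  move=> i j.
  have h1 : `|A i j| <= \sum_j `|A i j| by apply: (@le_sum_nonneg _ (fun j => `|A i j|) j).
  apply: le_trans h1 _.
  by apply: (@le_sum_nonneg _ (fun i => \sum_j `|A i j|) i) => k; rewrite sumr_ge0.
exists (n`!%:R * (1 + amax) ^+ n / K1).
  by rewrite divr_gt0 // mulr_gt0 ?ltr0n ?fact_gt0 // exprn_gt0 // ltr_pwDl.
move=> z z0 zle i j.
set B := 1%:M - z *: cmx A.
have c0 := cabs_ge0 z.
have hB : forall a b, cabs (B a b) <= (1 + amax) * (1 + cabs z).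
  move=> a b; rewrite /B !mxE.
  apply: le_trans (cabsD _ _) _; rewrite cabsN cabsM cabsR.
  have h1 : cabs ((a == b)%:R : R[i]) <= 1.
    by case: (a == b); rewrite ?cabs1 ?cabs0.
  have h2 := hAij a b; have h3 := normr_ge0 (A a b).
  by nra.
have Bu := hst _ zle.
rewrite /invmx Bu mxE cabsM cabsV.
have dpos : 0 < K1 * (1 + cabs z) ^+ n.+1.
  by rewrite mulr_gt0 // exprn_gt0 // ltr_pwDl.
have dle := hK1 z z0 zle.
have dpos' : 0 < cabs (\det B) by apply: lt_le_trans dle.
have e1 : (cabs (\det B))^-1 <= (K1 * (1 + cabs z) ^+ n.+1)^-1.
  by rewrite lef_pV2 ?posrE.
have e2 : cabs (\adj B i j) <= n`!%:R * ((1 + amax) * (1 + cabs z)) ^+ n.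
  rewrite mxE /cofactor cabsM cabsX cabsN cabs1 expr1n mul1r.
  apply: det_bound; first by rewrite mulr_ge0 // addr_ge0.
  by move=> k l; have := hB (lift j k) (lift i l); rewrite /B !mxE.
apply: le_trans (ler_pM _ _ e1 e2) _; rewrite ?invr_ge0 ?cabs_ge0 //.
have ne1 : 1 + cabs z != 0 by rewrite gt_eqF // ltr_pwDl.
have ne2 : K1 != 0 by rewrite gt_eqF.
rewrite exprMn exprS le_eqVlt; apply/orP; left; apply/eqP.
have ne3 : (1 + cabs z) ^+ n != 0 by rewrite expf_neq0.
move: ne1 ne2 ne3.
set v := (1 + cabs z) ^+ n; set w := (1 + amax) ^+ n; set f := (n`!%:R : R).
set u := 1 + cabs z => hu hk hv; clearbody u v w f.
by field; rewrite hu hk hv.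
Qed.
End M.


Section Main.
Variable R : realType.

Lemma N_props s (N : 'rV[R[i]]_s -> R) : is_norm N ->
  [/\ N 0 = 0, forall x, 0 <= N x &
   forall (I : Type) (r : seq I) (P : pred I) (F : I -> 'rV[R[i]]_s),
     N (\sum_(i <- r | P i) F i) <= \sum_(i <- r | P i) N (F i)].
Proof.
case=> _ hZ hD.
have N0 : N 0 = 0 by rewrite -(scale0r (0 : 'rV[R[i]]_s)) hZ cabs0 mul0r.
split => //.
  move=> x; have := hD x (- x); rewrite subrr N0 -scaleN1r hZ cabsN cabs1 mul1r.
  by move=> h; rewrite -(pmulr_rge0 _ (ltr0Sn _ 1)) mulr2n mulrDl mul1r.
move=> I r P F; elim/big_rec2: _ => [|i y1 y2 _ IH]; first by rewrite N0.
by apply: le_trans (hD _ _) _; rewrite lerD2l.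
Qed.

Lemma cabs_mulmx_entry s n (u : 'rV[R[i]]_s) (X : 'M[R[i]]_(s, n)) j :
  cabs ((u *m X) 0 j) <= \sum_k cabs (u 0 k) * cabs (X k j).
Proof.
rewrite mxE; apply: le_trans (cabs_sum _ _ _) _.
by apply: ler_sum => k _; rewrite cabsM.
Qed.

End Main.

Theorem lemma2p3 (R : realType) (s : nat)
  (A : 'M[R]_s) (b : 'cV[R]_s) (c : 'cV[R]_s)
  (* nodes c in [0,1]^s *)
  (hc : forall i : 'I_s, 0 <= c i 0 <= 1)
  (* (a) A-stability *)
  (hAst : A_stable A b)
  (* (a) classical order p >= 1, i.e. the order-1 condition b^T 1 = 1 *)
  (hord : \sum_(i < s) b i 0 = 1)
  (* (b) |r(iy)| < 1 for real y <> 0 *)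
  (himag : forall y : R, y != 0 -> cabs (rk_r A b (0 +i* y)) < 1)
  (* (c) A invertible *)
  (hAinv : A \in unitmx)
  (* (d) stiffly accurate: b^T A^{-1} = (0, ..., 0, 1) *)
  (hstiff : b^T *m invmx A = \row_(j < s) ((nat_of_ord j == s.-1)%:R))
  (* a fixed norm on C^s *)
  (N : 'rV[R[i]]_s -> R) (hN : is_norm N) :
  exists CA : R, 0 < CA /\
    forall z : R[i], z != 0 -> complex.Re z <= 0 ->
      Num.max (cabs (rk_r A b z)) (N (rk_q A b z)) <= CA / cabs z.
Proof.
have hst : forall z : R[i], complex.Re z <= 0 -> (1%:M - z *: cmx A) \in unitmx.
  by move=> z hz; case: (hAst z hz).
have [K Kp hK] := inv_entry_bound hst hAinv.
have [N0 Nge0 Nsum] := N_props hN.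
have hNZ : forall (a : R[i]) x, N (a *: x) = cabs a * N x by case: hN.
have s0 : (0 < s)%N.
  rewrite lt0n; apply/eqP => e; move: hord; rewrite big1.
    by move/eqP; rewrite eq_sym oner_eq0.
  by move=> i _; have := ltn_ord i; rewrite {2}e.
pose Bs := \sum_k `|b k 0|.
have Bs0 : 0 <= Bs by rewrite sumr_ge0.
pose En := \sum_(j < s) N (delta_mx 0 j).
have En0 : 0 <= En by rewrite sumr_ge0.
have bq : forall z : R[i], z != 0 -> complex.Re z <= 0 ->
    N (rk_q A b z) <= Bs * K * En / (1 + cabs z).
  move=> z z0 zle.
  have e : forall j, cabs (rk_q A b z 0 j) <= Bs * K / (1 + cabs z).
    move=> j; apply: le_trans (cabs_mulmx_entry _ _ _) _.
    rewrite /Bs -mulrA mulr_suml; apply: ler_sum => k _.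
    rewrite !mxE cabsR; apply: ler_wpM2l; first exact: normr_ge0.
    exact: hK.
  rewrite {1}(matrix_sum_delta (rk_q A b z)) big_ord1.
  apply: le_trans (Nsum _ _ _ _) _.
  rewrite mulrAC /En mulr_sumr; apply: ler_sum => j _.
  by rewrite hNZ ler_wpM2r.
have br : forall z : R[i], z != 0 -> complex.Re z <= 0 ->
    cabs (rk_r A b z) <= (s * s)%:R * K / (1 + cabs z).
  move=> z z0 zle.
  set B := 1%:M - z *: cmx A; set M := invmx B.
  have Bu := hst z zle.
  pose e := \row_(j < s) ((nat_of_ord j == s.-1)%:R : R).
  have hb : b^T = e *m A.
    by rewrite /e -hstiff -mulmxA mulVmx // mulmx1.
  have hq : rk_q A b z = cmx e *m cmx A *m M.
    by rewrite /rk_q /cmx map_trmx hb map_mxM.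
  have zq : z *: rk_q A b z = cmx e *m M - cmx e.
    rewrite hq scalemxAl scalemxAr.
    have -> : z *: cmx A = 1%:M - B by rewrite /B opprB addrC subrK.
    by rewrite mulmxBr mulmx1 mulmxBl -mulmxA mulmxV // mulmx1.
  have e1 : (cmx e *m (const_mx 1 : 'cV[R[i]]_s)) 0 0 = 1.
    have hj : (s.-1 < s)%N by rewrite ltn_predL.
    rewrite mxE (bigD1 (Ordinal hj)) //= big1 => [|j hj'].
      by rewrite !mxE eqxx mulr1 addr0.
    rewrite !mxE; case: eqP => [ej|]; last by rewrite mul0r.
    by case/eqP: hj'; apply: val_inj.
  have rr : rk_r A b z = (cmx e *m M *m (const_mx 1 : 'cV[R[i]]_s)) 0 0.
    rewrite /rk_r.
    have -> : z * (rk_q A b z *m (const_mx 1 : 'cV[R[i]]_s)) 0 0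
        = ((z *: rk_q A b z) *m (const_mx 1 : 'cV[R[i]]_s)) 0 0.
      by rewrite -scalemxAl [RHS]mxE.
    have sub00 : forall X Y : 'M[R[i]]_(1,1), (X - Y) 0 0 = X 0 0 - Y 0 0 by move=> X Y; rewrite !mxE.
    by rewrite zq mulmxBl sub00 e1 addrC subrK.
  rewrite rr; apply: le_trans (cabs_mulmx_entry _ _ _) _.
  apply: (@le_trans _ _ (\sum_(j < s) \sum_(k < s) K / (1 + cabs z))).
    apply: ler_sum => j _; rewrite [const_mx 1 j 0]mxE cabs1 mulr1.
    apply: le_trans (cabs_mulmx_entry _ _ _) _; apply: ler_sum => k _.
    rewrite !mxE cabsR.
    have h1 : `|((nat_of_ord k == s.-1)%:R : R)| <= 1.
      by case: (_ == _); rewrite ?normr0 ?normr1.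
    apply: le_trans (ler_wpM2r (cabs_ge0 _) h1) _.
    by rewrite mul1r hK.
  by rewrite sumr_const card_ord sumr_const card_ord -mulrnA mulr_natl mulrnAl.
exists (Bs * K * En + (s * s)%:R * K + 1); split.
  by rewrite ltr_wpDl // ?ltr01 // addr_ge0 // ?mulr_ge0 // ltW.
move=> z z0 zle.
have cp : 0 < cabs z by rewrite lt_def cabs_eq0 z0 cabs_ge0.
have mono : forall X, 0 <= X -> X <= Bs * K * En + (s * s)%:R * K + 1 ->
    X / (1 + cabs z) <= (Bs * K * En + (s * s)%:R * K + 1) / cabs z.
  move=> X X0 XC; have c1 : 0 < 1 + cabs z by rewrite addr_gt0.
  apply: (@le_trans _ _ (X / cabs z)).
    by rewrite ler_wpM2l // lef_pV2 ?posrE // lerDr.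
  by rewrite ler_wpM2r // invr_ge0 ltW.
have KE0 : 0 <= Bs * K * En by rewrite !mulr_ge0 // ltW.
have KS0 : 0 <= (s * s)%:R * K by rewrite mulr_ge0 ?ler0n // ltW.
rewrite ge_max; apply/andP; split.
  apply: le_trans (br z z0 zle) _; apply: mono => //.
  lra.
apply: le_trans (bq z z0 zle) _; apply: mono => //.
lra.
Qed.
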